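(* Let $(\xi,\sigma)$ be a (sufficiently regular, global) solution of the normalized flow described below on $[0,\infty)\times\mathbb S^1$. Then: (i) $\tau\mapsto\int_0^1|\xi(\tau,s)|^2ds$ is monotone increasing, and $\int_0^1|\xi(\tau,s)|^2ds\le\frac1{4\pi^2}$ for all $\tau$; (ii) $\tau\mapsto\int_0^1\sigma(\tau,s)\,ds$ is monotone increasing, and $\int_0^1\sigma(\tau,s)\,ds\le\int_0^1|\xi(\tau,s)|^2ds$ for all $\tau$; (iii) the limits as $\tau\to\infty$ of $\int_0^1\sigma(\tau,s)\,ds$ and of $\int_0^1|\xi(\tau,s)|^2ds$ exist and coincide.
   Context: $\mathbb S^1=\mathbb R/\mathbb Z$, $d\ge2$. The normalized flow: $\xi:[0,\infty)\times\mathbb S^1\to\mathbb R^d$ and $\sigma:[0,\infty)\times\mathbb S^1\to\mathbb R$ with $|\partial_s\xi(\tau,s)|=1$ and $\int_0^1\xi(\tau,s)\,ds=0$ for all $(\tau,s)$, satisfying $$\partial_\tau\xi=\partial_s(\sigma\partial_s\xi)+\xi,\qquad \partial_{ss}\sigma-\sigma|\partial_{ss}\xi|^2=-1,\ \ \sigma(\tau,\cdot)\ \text{periodic on } \mathbb S^1.$$ *)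

(* Defs.v *)
From Stdlib Require Import Reals.
From Coquelicot Require Import Coquelicot.
Open Scope R_scope.

(* A curve in R^d is represented by its components xi i, i < d (components
   with index >= d are irrelevant).  Functions of (tau, s) : R * R, with
   s-periodicity of period 1 encoding S^1 = R/Z. *)

Definition d_s (f : R -> R -> R) : R -> R -> R :=
  fun t s => Derive (fun s' => f t s') s.
Definition d_t (f : R -> R -> R) : R -> R -> R :=
  fun t s => Derive (fun t' => f t' s) t.

Fixpoint Dts (m n : nat) (f : R -> R -> R) : R -> R -> R :=
  match n with
  | O => Nat.iter m d_t f
  | S n' => d_s (Dts m n' f)
  end.

Definition smooth2 (f : R -> R -> R) : Prop :=
  forall m n : nat,
    (forall t s, ex_derive (fun s' => Dts m n f t s') s) /\
    (forall t s, ex_derive (fun t' => Dts m n f t' s) t) /\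
    (forall t s, continuous (fun p : R * R => Dts m n f (fst p) (snd p)) (t, s)).

Definition sumd (d : nat) (g : nat -> R) : R :=
  match d with O => 0 | S k => sum_f_R0 g k end.

Definition sqnorm (d : nat) (xi : nat -> R -> R -> R) (t s : R) : R :=
  sumd d (fun i => (xi i t s) ^ 2).

Definition normalized_flow (d : nat) (xi : nat -> R -> R -> R)
    (sigma : R -> R -> R) : Prop :=
  (forall i, (i < d)%nat -> smooth2 (xi i)) /\
  smooth2 sigma /\
  (forall i t s, (i < d)%nat -> xi i t (s + 1) = xi i t s) /\
  (forall t s, sigma t (s + 1) = sigma t s) /\
  (forall t s, 0 <= t -> sumd d (fun i => (d_s (xi i) t s) ^ 2) = 1) /\
  (forall i t, (i < d)%nat -> 0 <= t -> RInt (fun s => xi i t s) 0 1 = 0) /\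
  (forall i t s, (i < d)%nat -> 0 <= t ->
     d_t (xi i) t s =
     d_s (fun t' s' => sigma t' s' * d_s (xi i) t' s') t s + xi i t s) /\
  (forall t s, 0 <= t ->
     d_s (d_s sigma) t s
     - sigma t s * sumd d (fun i => (d_s (d_s (xi i)) t s) ^ 2) = -1).

(* Main.v *)
Require Import Defs.
From Stdlib Require Import Reals Lra Lia.
From Coquelicot Require Import Coquelicot.
Open Scope R_scope.

Lemma c2_of (F : R -> R -> R) t s :
  continuous (fun p : R * R => F (fst p) (snd p)) (t, s) -> continuity_2d_pt F t s.
Proof. intro H. apply continuity_2d_pt_filterlim. exact H. Qed.

Lemma c2_1 (F : R -> R -> R) t s : continuity_2d_pt F t s -> continuous (fun u => F u s) t.
Proof.
  intro H. apply continuity_pt_filterlim.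
  intros eps Heps. destruct (H (mkposreal eps Heps)) as [dl Hd].
  exists dl. split. apply cond_pos. intros x [_ Hx]. simpl in *. unfold R_dist in *.
  apply Hd; auto. rewrite Rminus_eq_0, Rabs_R0. apply cond_pos.
Qed.

Lemma c2_2 (F : R -> R -> R) t s : continuity_2d_pt F t s -> continuous (fun v => F t v) s.
Proof.
  intro H. apply continuity_pt_filterlim.
  intros eps Heps. destruct (H (mkposreal eps Heps)) as [dl Hd].
  exists dl. split. apply cond_pos. intros x [_ Hx]. simpl in *. unfold R_dist in *.
  apply Hd; auto. rewrite Rminus_eq_0, Rabs_R0. apply cond_pos.
Qed.

Lemma c2_swap (F : R -> R -> R) t s : continuity_2d_pt F t s -> continuity_2d_pt (fun u v => F v u) s t.
Proof.
  intros H eps. destruct (H eps) as [dl Hd]. exists dl. intros u v Hu Hv. apply Hd; auto.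
Qed.

Lemma RInt_deriv (f df : R -> R) a b :
  (forall x, Rmin a b <= x <= Rmax a b -> is_derive f x (df x)) ->
  (forall x, Rmin a b <= x <= Rmax a b -> continuous df x) ->
  RInt df a b = f b - f a.
Proof.
  intros H1 H2. apply is_RInt_unique. apply (is_RInt_derive f df a b H1 H2).
Qed.

Lemma ex_RInt_c (f : R -> R) a b : (forall x, continuous f x) -> ex_RInt f a b.
Proof. intros H. apply (@ex_RInt_continuous R_CompleteNormedModule). intros; apply H. Qed.

Lemma RInt_periodic_deriv (f df : R -> R) :
  (forall x, is_derive f x (df x)) -> (forall x, continuous df x) ->
  f 1 = f 0 -> RInt df 0 1 = 0.
Proof.
  intros H1 H2 H3. rewrite (RInt_deriv f df). lra. intros; auto. intros; auto.
Qed.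

Lemma RInt_plus' (f g : R -> R) a b : ex_RInt f a b -> ex_RInt g a b ->
  RInt (fun x => f x + g x) a b = RInt f a b + RInt g a b.
Proof. intros. apply (RInt_plus f g a b); auto. Qed.

Lemma RInt_minus' (f g : R -> R) a b : ex_RInt f a b -> ex_RInt g a b ->
  RInt (fun x => f x - g x) a b = RInt f a b - RInt g a b.
Proof. intros. apply (RInt_minus f g a b); auto. Qed.

Lemma RInt_scal' (f : R -> R) a b l : ex_RInt f a b ->
  RInt (fun x => l * f x) a b = l * RInt f a b.
Proof. intros. apply (RInt_scal f a b l); auto. Qed.

Lemma sumd_ext d (g h : nat -> R) : (forall i, (i < d)%nat -> g i = h i) -> sumd d g = sumd d h.
Proof.
  destruct d as [|k]; simpl; auto. intros H. induction k as [|k IH]; simpl.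
  apply H; lia. rewrite IH, H; auto; intros; apply H; lia.
Qed.

Lemma sumd_plus d (g h : nat -> R) : sumd d (fun i => g i + h i) = sumd d g + sumd d h.
Proof. destruct d as [|k]; simpl. lra. induction k; simpl; lra. Qed.

Lemma sumd_minus d (g h : nat -> R) : sumd d (fun i => g i - h i) = sumd d g - sumd d h.
Proof. destruct d as [|k]; simpl. lra. induction k; simpl; lra. Qed.

Lemma sumd_scal d l (g : nat -> R) : sumd d (fun i => l * g i) = l * sumd d g.
Proof. destruct d as [|k]; simpl. lra. induction k; simpl; lra. Qed.

Lemma sumd_ge0 d (g : nat -> R) : (forall i, (i < d)%nat -> 0 <= g i) -> 0 <= sumd d g.
Proof.
  destruct d as [|k]; simpl; intros H. lra. induction k; simpl. apply H; lia.
  assert (0 <= g (S k)) by (apply H; lia). assert (0 <= sum_f_R0 g k) by (apply IHk; intros; apply H; lia). lra.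
Qed.

Lemma sumd_le d (g h : nat -> R) : (forall i, (i < d)%nat -> g i <= h i) -> sumd d g <= sumd d h.
Proof.
  intros H. assert (0 <= sumd d (fun i => h i - g i)). apply sumd_ge0. intros i Hi. specialize (H i Hi). lra.
  rewrite sumd_minus in H0. lra.
Qed.

Lemma is_derive_sumd d (g g' : nat -> R -> R) x :
  (forall i, (i < d)%nat -> is_derive (g i) x (g' i x)) ->
  is_derive (fun y => sumd d (fun i => g i y)) x (sumd d (fun i => g' i x)).
Proof.
  destruct d as [|k]; simpl; intros H. apply (is_derive_const (K:=R_AbsRing) (V:=R_NormedModule) 0).
  induction k as [|k IH]; simpl. apply H; lia.
  apply (is_derive_plus (fun y => sum_f_R0 (fun i => g i y) k) (fun y => g (S k) y)).
  apply IH; intros; apply H; lia. apply H; lia.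
Qed.

Lemma c2_sumd d (F : nat -> R -> R -> R) t s :
  (forall i, (i < d)%nat -> continuity_2d_pt (F i) t s) ->
  continuity_2d_pt (fun u v => sumd d (fun i => F i u v)) t s.
Proof.
  destruct d as [|k]; simpl; intros H. apply continuity_2d_pt_const.
  induction k as [|k IH]; simpl. apply H; lia.
  apply (continuity_2d_pt_plus (fun u v => sum_f_R0 (fun i => F i u v) k) (F (S k))).
  apply IH; intros; apply H; lia. apply H; lia.
Qed.

Lemma RInt_sumd d (g : nat -> R -> R) a b :
  (forall i, (i < d)%nat -> ex_RInt (g i) a b) ->
  RInt (fun x => sumd d (fun i => g i x)) a b = sumd d (fun i => RInt (g i) a b).
Proof.
  destruct d as [|k]; simpl; intros H.
  rewrite RInt_const. compute. ring.
  induction k as [|k IH]; simpl. reflexivity.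
  rewrite RInt_plus'. rewrite IH. auto. intros; apply H; lia.
  apply ex_RInt_ext with (fun x => sumd (S k) (fun i => g i x)). intros; reflexivity.
  clear IH. induction k. simpl. apply H; lia. simpl. apply (ex_RInt_plus (fun x => sum_f_R0 (fun i => g i x) k)).
  apply IHk. intros; apply H; lia. apply H; lia. apply H; lia.
Qed.

Lemma loc_all (x : R) (P : R -> Prop) : (forall y, P y) -> locally x P.
Proof. intros H. exists (mkposreal 1 Rlt_0_1). intros; apply H. Qed.

Lemma swap_lemma (h : R -> R -> R) :
  (forall t s, ex_derive (fun u => h u s) t) ->
  (forall t s, ex_derive (fun v => h t v) s) ->
  (forall t s, continuity_2d_pt (d_t h) t s) ->
  (forall t s, ex_derive (fun v => d_t h t v) s) ->
  (forall t s, continuity_2d_pt (d_s (d_t h)) t s) ->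
  forall t0 s, is_derive (fun u => d_s h u s) t0 (d_s (d_t h) t0 s).
Proof.
  intros Ht Hs Hc Hts Hc2 t0 s.
  set (G := fun tau => d_s (d_t h) tau s).
  assert (S1 : forall t v, h t v = h t0 v + RInt (fun tau => d_t h tau v) t0 t).
  { intros t v. rewrite (RInt_deriv (fun tau => h tau v) (fun tau => d_t h tau v)). ring.
    intros x _. apply Derive_correct. apply Ht.
    intros x _. apply (c2_1 (d_t h)). apply Hc. }
  assert (S2 : forall t, d_s h t s = d_s h t0 s + RInt G t0 t).
  { intros t. unfold d_s at 1.
    rewrite (Derive_ext (fun v => h t v) (fun v => h t0 v + RInt (fun tau => d_t h tau v) t0 t) s (S1 t)).
    apply is_derive_unique.
    apply (is_derive_plus (fun v => h t0 v) (fun v => RInt (fun tau => d_t h tau v) t0 t)).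
    apply Derive_correct, Hs.
    apply (is_derive_RInt_param (fun u tau => d_t h tau u) t0 t s).
    apply loc_all. intros y tau _. apply Hts.
    intros tau _. apply (c2_swap (d_s (d_t h)) tau s). apply Hc2.
    apply loc_all. intros y. apply ex_RInt_c. intros x. apply (c2_1 (d_t h)). apply Hc. }
  apply is_derive_ext with (fun t => d_s h t0 s + RInt G t0 t).
  intros t; symmetry; apply S2.
  replace (d_s (d_t h) t0 s) with (0 + G t0) by (unfold G; ring).
  apply (is_derive_plus (fun _ => d_s h t0 s) (fun t => RInt G t0 t)).
  apply (is_derive_const (K:=R_AbsRing) (V:=R_NormedModule)).
  apply (is_derive_RInt G (fun t => RInt G t0 t) t0 t0).
  apply loc_all. intros b. apply (RInt_correct (V:=R_CompleteNormedModule)).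
  apply ex_RInt_c. intros x. apply (c2_1 (d_s (d_t h)) x s ). apply Hc2.
  apply (c2_1 (d_s (d_t h))). apply Hc2.
Qed.

Lemma sm_s f (Hf : smooth2 f) m n t s : ex_derive (fun s' => Dts m n f t s') s.
Proof. exact (proj1 (Hf m n) t s). Qed.
Lemma sm_t f (Hf : smooth2 f) m n t s : ex_derive (fun t' => Dts m n f t' s) t.
Proof. exact (proj1 (proj2 (Hf m n)) t s). Qed.
Lemma Dts_c f (Hf : smooth2 f) m n t s : continuity_2d_pt (Dts m n f) t s.
Proof. apply c2_of. exact (proj2 (proj2 (Hf m n)) t s). Qed.

Lemma Dts_ds f (Hf : smooth2 f) m n t s : is_derive (fun v => Dts m n f t v) s (Dts m (S n) f t s).
Proof. apply Derive_correct. apply sm_s; auto. Qed.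

Lemma Dts_t_eq f (Hf : smooth2 f) m n : forall t s, d_t (Dts m n f) t s = Dts (S m) n f t s.
Proof.
  induction n as [|n IH]; intros t s. reflexivity.
  change (Dts m (S n) f) with (d_s (Dts m n f)).
  change (Dts (S m) (S n) f t s) with (Derive (fun v => Dts (S m) n f t v) s).
  assert (E : d_s (d_t (Dts m n f)) t s = Derive (fun v => Dts (S m) n f t v) s).
  { unfold d_s. apply Derive_ext. intros; apply IH. }
  rewrite <- E.
  unfold d_t at 1.
  apply is_derive_unique.
  apply (swap_lemma (Dts m n f)).
  - intros; apply sm_t; auto.
  - intros; apply sm_s; auto.
  - intros tt ss. apply continuity_2d_pt_ext with (Dts (S m) n f). intros; symmetry; apply IH. apply Dts_c; auto.
  - intros tt ss. apply ex_derive_ext with (fun v => Dts (S m) n f tt v). intros; symmetry; apply IH. apply sm_s; auto.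
  - intros tt ss. apply continuity_2d_pt_ext with (Dts (S m) (S n) f).
    intros x y. unfold d_s. apply Derive_ext. intros; symmetry; apply IH. apply Dts_c; auto.
Qed.

Lemma Dts_dt f (Hf : smooth2 f) m n t s : is_derive (fun u => Dts m n f u s) t (Dts (S m) n f t s).
Proof. rewrite <- Dts_t_eq; auto. apply Derive_correct. apply sm_t; auto. Qed.

Lemma is_derive_shift1 (g : R -> R) s l : is_derive g (s + 1) l -> is_derive (fun v => g (v + 1)) s l.
Proof.
  intros H. replace l with (scal 1 l) by (unfold scal; simpl; unfold mult; simpl; ring).
  apply (is_derive_comp g (fun v => v + 1)). exact H.
  auto_derive; try exact I; try ring.
Qed.

Lemma Dts_per f (Hf : smooth2 f) (Hper : forall t s, f t (s + 1) = f t s) m n :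
  forall t s, Dts m n f t (s + 1) = Dts m n f t s.
Proof.
  induction n as [|n IH].
  - induction m as [|m IHm]; intros t s. apply Hper.
    change (Derive (fun u => Dts m 0 f u (s+1)) t = Derive (fun u => Dts m 0 f u s) t).
    apply Derive_ext. intros; apply IHm.
  - intros t s. change (Derive (fun v => Dts m n f t v) (s+1) = Derive (fun v => Dts m n f t v) s).
    symmetry. apply is_derive_unique.
    apply is_derive_ext with (fun v => Dts m n f t (v + 1)). intros; apply IH.
    apply (is_derive_shift1 (fun v => Dts m n f t v)).
    apply Derive_correct. apply sm_s; auto.
Qed.

Lemma c2_pow2 (F : R -> R -> R) t s : continuity_2d_pt F t s -> continuity_2d_pt (fun u v => F u v ^ 2) t s.
Proof.
  intros H. apply continuity_2d_pt_ext with (fun u v => F u v * F u v). intros; ring.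
  apply continuity_2d_pt_mult; auto.
Qed.

Lemma c2_f f (Hf : smooth2 f) t s : continuity_2d_pt f t s.
Proof. exact (Dts_c f Hf 0 0 t s). Qed.

Lemma ex_RInt_2d (F : R -> R -> R) t a b : (forall x, continuity_2d_pt F t x) -> ex_RInt (fun v => F t v) a b.
Proof. intros H. apply ex_RInt_c. intros x. apply c2_2. apply H. Qed.

Lemma cont_2d (F : R -> R -> R) t x : continuity_2d_pt F t x -> continuous (fun v => F t v) x.
Proof. apply c2_2. Qed.

Ltac c2 := repeat first [ apply continuity_2d_pt_minus | apply continuity_2d_pt_plus | apply continuity_2d_pt_opp
  | apply continuity_2d_pt_mult | apply c2_pow2
  | (apply c2_sumd; let i := fresh "i" in let Hi := fresh "Hi" in intros i Hi)
  | apply continuity_2d_pt_const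
  | (apply Dts_c; solve [auto]) | (apply c2_f; solve [auto]) ].

Lemma is_derive_ext' (f g : R -> R) x l : (forall t, f t = g t) -> is_derive f x l -> is_derive g x l.
Proof. intros H1 H2. apply (is_derive_ext f g x l H1 H2). Qed.

Lemma is_derive_sq (g : R -> R) x l : is_derive g x l -> is_derive (fun y => g y ^ 2) x (2 * l * g x).
Proof. intros H. apply is_derive_ext' with (fun y => g y * g y). intros; ring.
  replace (2 * l * g x) with (l * g x + g x * l) by ring.
  apply (is_derive_mult g g x l l H H). intros; apply Rmult_comm. Qed.

Lemma is_derive_mult' (f g : R -> R) x a b : is_derive f x a -> is_derive g x b ->
  is_derive (fun y => f y * g y) x (a * g x + f x * b).
Proof. intros H1 H2. apply (is_derive_mult f g x a b H1 H2). intros; apply Rmult_comm. Qed.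

Lemma is_derive_plus' (f g : R -> R) x a b : is_derive f x a -> is_derive g x b ->
  is_derive (fun y => f y + g y) x (a + b).
Proof. intros H1 H2. apply (is_derive_plus f g x a b H1 H2). Qed.

Lemma is_derive_minus' (f g : R -> R) x a b : is_derive f x a -> is_derive g x b ->
  is_derive (fun y => f y - g y) x (a - b).
Proof. intros H1 H2. apply (is_derive_minus f g x a b H1 H2). Qed.

Lemma is_derive_cst' (c x : R) : is_derive (fun _ => c) x 0.
Proof. apply (is_derive_const (K:=R_AbsRing) (V:=R_NormedModule)). Qed.

Ltac unpack H := destruct H as (Hxi & Hsg & Hpx & Hps & Hunit & Hmean & Hflow & Hsig).

Lemma test d xi sigma (H : normalized_flow d xi sigma) t x :
  continuity_2d_pt (fun u v => sumd d (fun i => (Dts 1 0 (xi i) u v - xi i u v) ^ 2) + sigma u v * Dts 0 2 sigma u v) t x.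
Proof. unpack H. c2. Qed.

Lemma V_eq d xi sigma (H : normalized_flow d xi sigma) i t s : (i < d)%nat ->
  d_s (fun t' s' => sigma t' s' * d_s (xi i) t' s') t s =
  Dts 0 1 sigma t s * Dts 0 1 (xi i) t s + sigma t s * Dts 0 2 (xi i) t s.
Proof.
  unpack H. intros Hi. unfold d_s at 1. apply is_derive_unique.
  apply (is_derive_mult' (fun v => sigma t v) (fun v => d_s (xi i) t v)).
  apply (Dts_ds sigma Hsg 0 0). apply (Dts_ds (xi i) (Hxi i Hi) 0 1).
Qed.

Lemma flowV d xi sigma (H : normalized_flow d xi sigma) i t s : (i < d)%nat -> 0 <= t ->
  Dts 1 0 (xi i) t s - xi i t s =
  Dts 0 1 sigma t s * Dts 0 1 (xi i) t s + sigma t s * Dts 0 2 (xi i) t s.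
Proof.
  intros Hi Ht. rewrite <- (V_eq d xi sigma H i t s Hi). unpack H.
  change (Dts 1 0 (xi i) t s) with (d_t (xi i) t s). rewrite Hflow; auto. ring.
Qed.

Lemma unit' d xi sigma (H : normalized_flow d xi sigma) t s : 0 <= t ->
  sumd d (fun i => Dts 0 1 (xi i) t s ^ 2) = 1.
Proof. unpack H. intros Ht. apply Hunit; auto. Qed.

Lemma sig_eq d xi sigma (H : normalized_flow d xi sigma) t s : 0 <= t ->
  Dts 0 2 sigma t s = sigma t s * sumd d (fun i => Dts 0 2 (xi i) t s ^ 2) - 1.
Proof. unpack H. intros Ht. specialize (Hsig t s Ht). simpl in *. lra. Qed.

Lemma I2 d xi sigma (H : normalized_flow d xi sigma) t s : 0 <= t ->
  sumd d (fun i => Dts 0 1 (xi i) t s * Dts 0 2 (xi i) t s) = 0.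
Proof.
  intros Ht.
  assert (D1 : is_derive (fun v => sumd d (fun i => Dts 0 1 (xi i) t v ^ 2)) s
     (sumd d (fun i => 2 * Dts 0 2 (xi i) t s * Dts 0 1 (xi i) t s))).
  { apply (is_derive_sumd d (fun i v => Dts 0 1 (xi i) t v ^ 2) (fun i v => 2 * Dts 0 2 (xi i) t v * Dts 0 1 (xi i) t v)).
    intros i Hi. apply is_derive_sq. unpack H. apply (Dts_ds (xi i) (Hxi i Hi) 0 1). }
  assert (D2 : is_derive (fun v => sumd d (fun i => Dts 0 1 (xi i) t v ^ 2)) s 0).
  { apply is_derive_ext' with (fun _ => 1). intros v; symmetry; apply (unit' d xi sigma H); auto.
    apply is_derive_cst'. }
  apply is_derive_unique in D1. apply is_derive_unique in D2. rewrite D1 in D2.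
  rewrite (sumd_ext d _ (fun i => 2 * (Dts 0 1 (xi i) t s * Dts 0 2 (xi i) t s))) in D2.
  rewrite sumd_scal in D2. lra. intros; ring.
Qed.

Lemma K1 d xi sigma (H : normalized_flow d xi sigma) t s : 0 <= t ->
  sumd d (fun i => (Dts 1 0 (xi i) t s - xi i t s) ^ 2) =
  Dts 0 1 sigma t s ^ 2 + sigma t s * Dts 0 2 sigma t s + sigma t s.
Proof.
  intros Ht. set (a := Dts 0 1 sigma t s). set (b := sigma t s).
  rewrite (sumd_ext d _ (fun i => a ^ 2 * Dts 0 1 (xi i) t s ^ 2 + (2 * a * b * (Dts 0 1 (xi i) t s * Dts 0 2 (xi i) t s) + b ^ 2 * Dts 0 2 (xi i) t s ^ 2))).
  rewrite !sumd_plus, !sumd_scal. rewrite (unit' d xi sigma H t s Ht), (I2 d xi sigma H t s Ht).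
  rewrite (sig_eq d xi sigma H t s Ht). fold b. ring.
  intros i Hi. rewrite (flowV d xi sigma H i t s Hi Ht). fold a b. ring.
Qed.

Lemma K2 d xi sigma (H : normalized_flow d xi sigma) t s : 0 <= t ->
  is_derive (fun v => sigma t v * sumd d (fun i => xi i t v * Dts 0 1 (xi i) t v)) s
    (sumd d (fun i => xi i t s * (Dts 1 0 (xi i) t s - xi i t s)) + sigma t s).
Proof.
  intros Ht.
  assert (D : is_derive (fun v => sigma t v * sumd d (fun i => xi i t v * Dts 0 1 (xi i) t v)) s
    (Dts 0 1 sigma t s * sumd d (fun i => xi i t s * Dts 0 1 (xi i) t s) +
     sigma t s * sumd d (fun i => Dts 0 1 (xi i) t s * Dts 0 1 (xi i) t s + xi i t s * Dts 0 2 (xi i) t s))).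
  { apply (is_derive_mult' (fun v => sigma t v)). unpack H. apply (Dts_ds sigma Hsg 0 0).
    apply (is_derive_sumd d (fun i v => xi i t v * Dts 0 1 (xi i) t v)
       (fun i v => Dts 0 1 (xi i) t v * Dts 0 1 (xi i) t v + xi i t v * Dts 0 2 (xi i) t v)).
    intros i Hi. unpack H. apply (is_derive_mult' (fun v => xi i t v)).
    apply (Dts_ds (xi i) (Hxi i Hi) 0 0). apply (Dts_ds (xi i) (Hxi i Hi) 0 1). }
  eapply is_derive_ext'. intros; reflexivity.
  replace (sumd d (fun i => xi i t s * (Dts 1 0 (xi i) t s - xi i t s)) + sigma t s) with
    (Dts 0 1 sigma t s * sumd d (fun i => xi i t s * Dts 0 1 (xi i) t s) +
     sigma t s * sumd d (fun i => Dts 0 1 (xi i) t s * Dts 0 1 (xi i) t s + xi i t s * Dts 0 2 (xi i) t s)).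
  exact D.
  rewrite sumd_plus. rewrite (sumd_ext d (fun i => Dts 0 1 (xi i) t s * Dts 0 1 (xi i) t s) (fun i => Dts 0 1 (xi i) t s ^ 2)) by (intros; ring).
  rewrite (unit' d xi sigma H t s Ht).
  rewrite (sumd_ext d (fun i => xi i t s * (Dts 1 0 (xi i) t s - xi i t s))
     (fun i => Dts 0 1 sigma t s * (xi i t s * Dts 0 1 (xi i) t s) + sigma t s * (xi i t s * Dts 0 2 (xi i) t s))).
  rewrite sumd_plus, !sumd_scal. ring.
  intros i Hi. rewrite (flowV d xi sigma H i t s Hi Ht). ring.
Qed.

Lemma K3 d xi sigma (H : normalized_flow d xi sigma) t s :
  is_derive (fun v => sigma t v * Dts 0 1 sigma t v) s
    (Dts 0 1 sigma t s ^ 2 + sigma t s * Dts 0 2 sigma t s).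
Proof.
  unpack H. eapply is_derive_ext'. intros; reflexivity.
  replace (Dts 0 1 sigma t s ^ 2 + sigma t s * Dts 0 2 sigma t s) with
    (Dts 0 1 sigma t s * Dts 0 1 sigma t s + sigma t s * Dts 0 2 sigma t s) by ring.
  apply (is_derive_mult' (fun v => sigma t v)). apply (Dts_ds sigma Hsg 0 0). apply (Dts_ds sigma Hsg 0 1).
Qed.

Definition Ef d xi t : R := RInt (fun s => sqnorm d xi t s) 0 1.
Definition Sf (sigma : R -> R -> R) t : R := RInt (fun s => sigma t s) 0 1.
Definition Qf d (xi : nat -> R -> R -> R) t : R :=
  RInt (fun v => sumd d (fun i => (Dts 1 0 (xi i) t v - xi i t v) ^ 2)) 0 1.

Lemma RInt_ext' (f g : R -> R) a b : (forall x, Rmin a b < x < Rmax a b -> f x = g x) -> RInt f a b = RInt g a b.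
Proof. intros H. apply (RInt_ext f g a b H). Qed.

Lemma int_deriv_per (F G : R -> R -> R) t :
  (forall v, is_derive (fun w => F t w) v (G t v)) -> (forall v, continuity_2d_pt G t v) ->
  F t 1 = F t 0 -> RInt (fun v => G t v) 0 1 = 0.
Proof.
  intros H1 H2 H3. apply (RInt_periodic_deriv (fun w => F t w)); auto.
  intros x. apply cont_2d. auto.
Qed.

Lemma RInt_lin (F G H K : R -> R) a b c e :
  ex_RInt F 0 1 -> ex_RInt G 0 1 -> ex_RInt H 0 1 -> ex_RInt K 0 1 ->
  RInt (fun v => a * F v + b * G v + c * H v + e * K v) 0 1 =
  a * RInt F 0 1 + b * RInt G 0 1 + c * RInt H 0 1 + e * RInt K 0 1.
Proof.
  intros HF HG HH HK.
  assert (E1 : forall (f : R -> R) l, ex_RInt f 0 1 -> ex_RInt (fun v => l * f v) 0 1).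
  { intros f l Hf. apply (ex_RInt_scal f 0 1 l Hf). }
  assert (E2 : forall f g : R -> R, ex_RInt f 0 1 -> ex_RInt g 0 1 -> ex_RInt (fun v => f v + g v) 0 1).
  { intros f g Hf Hg. apply (ex_RInt_plus f g 0 1 Hf Hg). }
  rewrite RInt_plus'; auto. rewrite RInt_plus'; auto. rewrite RInt_plus'; auto.
  rewrite !RInt_scal'; auto.
Qed.

Lemma per01 f (Hf : smooth2 f) (Hper : forall t s, f t (s + 1) = f t s) m n t :
  Dts m n f t 1 = Dts m n f t 0.
Proof. rewrite <- (Dts_per f Hf Hper m n t 0). rewrite Rplus_0_l. reflexivity. Qed.

Lemma xi_per01 d xi sigma (H : normalized_flow d xi sigma) i m n t : (i < d)%nat ->
  Dts m n (xi i) t 1 = Dts m n (xi i) t 0.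
Proof. unpack H. intros Hi. apply per01; auto. Qed.

Lemma sg_per01 d xi sigma (H : normalized_flow d xi sigma) m n t :
  Dts m n sigma t 1 = Dts m n sigma t 0.
Proof. unpack H. apply per01; auto. Qed.

Lemma intA d xi sigma (H : normalized_flow d xi sigma) t : 0 <= t ->
  RInt (fun v => sumd d (fun i => xi i t v * (Dts 1 0 (xi i) t v - xi i t v)) + sigma t v) 0 1 = 0.
Proof.
  intros Ht.
  apply (int_deriv_per (fun u v => sigma u v * sumd d (fun i => xi i u v * Dts 0 1 (xi i) u v))
     (fun u v => sumd d (fun i => xi i u v * (Dts 1 0 (xi i) u v - xi i u v)) + sigma u v)).
  intros v. apply (K2 d xi sigma H t v Ht).
  intros v. pose proof H as H'. unpack H'. c2.
  simpl. pose proof (sg_per01 d xi sigma H 0 0 t) as E0. simpl in E0. rewrite E0. f_equal.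
  apply sumd_ext. intros i Hi.
  pose proof (xi_per01 d xi sigma H i 0 0 t Hi) as E1. pose proof (xi_per01 d xi sigma H i 0 1 t Hi) as E2.
  simpl in E1, E2. rewrite E1, E2. reflexivity.
Qed.

Lemma intB d xi sigma (H : normalized_flow d xi sigma) t :
  RInt (fun v => Dts 0 1 sigma t v ^ 2 + sigma t v * Dts 0 2 sigma t v) 0 1 = 0.
Proof.
  apply (int_deriv_per (fun u v => sigma u v * Dts 0 1 sigma u v)
     (fun u v => Dts 0 1 sigma u v ^ 2 + sigma u v * Dts 0 2 sigma u v)).
  intros v. apply (K3 d xi sigma H t v).
  intros v. pose proof H as H'. unpack H'. c2.
  pose proof (sg_per01 d xi sigma H 0 0 t) as E0. pose proof (sg_per01 d xi sigma H 0 1 t) as E1.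
  simpl in E0, E1 |- *. rewrite E0, E1. reflexivity.
Qed.

Lemma ex_RInt_2d'' (F : R -> R -> R) t a b : (forall x, continuity_2d_pt F t x) -> ex_RInt (F t) a b.
Proof. apply ex_RInt_2d. Qed.

Ltac exr H t := let H0 := fresh in pose proof H as H0; unpack H0;
  match goal with |- ex_RInt ?g ?a ?b =>
    let F := eval pattern t in g in
    match F with ?F' t => apply (ex_RInt_2d'' F' t a b) end end; intros; c2.

Lemma ES d xi sigma (H : normalized_flow d xi sigma) t : 0 <= t ->
  Ef d xi t - Sf sigma t = RInt (fun v => sumd d (fun i => Dts 1 0 (xi i) t v ^ 2)) 0 1.
Proof.
  intros Ht.
  rewrite (RInt_ext' _ (fun v => 1 * sqnorm d xi t v + (-1) * sigma t v
      + 2 * (sumd d (fun i => xi i t v * (Dts 1 0 (xi i) t v - xi i t v)) + sigma t v)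
      + 1 * (Dts 0 1 sigma t v ^ 2 + sigma t v * Dts 0 2 sigma t v))).
  rewrite RInt_lin. rewrite (intA d xi sigma H t Ht), (intB d xi sigma H t). unfold Ef, Sf. set (a := RInt (sqnorm d xi t) 0 1). set (b := RInt (sigma t) 0 1). ring.
  apply (ex_RInt_2d (fun u v => sqnorm d xi u v)); intros; unfold sqnorm; pose proof H as H0; unpack H0; c2. exr H t. exr H t. exr H t.
  intros v _. unfold sqnorm.
  rewrite (sumd_ext d (fun i => Dts 1 0 (xi i) t v ^ 2) (fun i => 1 * xi i t v ^ 2 + (2 * (xi i t v * (Dts 1 0 (xi i) t v - xi i t v)) + (Dts 1 0 (xi i) t v - xi i t v) ^ 2))).
  rewrite !sumd_plus, !sumd_scal. rewrite (K1 d xi sigma H t v Ht). ring. intros; ring.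
Qed.

Lemma S_le_E d xi sigma (H : normalized_flow d xi sigma) t : 0 <= t -> Sf sigma t <= Ef d xi t.
Proof.
  intros Ht. cut (0 <= Ef d xi t - Sf sigma t). lra.
  rewrite ES; auto. apply RInt_ge_0. lra. exr H t.
  intros x _. apply sumd_ge0. intros. apply pow2_ge_0.
Qed.

Lemma QS d xi sigma (H : normalized_flow d xi sigma) t : 0 <= t -> Qf d xi t = Sf sigma t.
Proof.
  intros Ht. unfold Qf.
  rewrite (RInt_ext' _ (fun v => 1 * (Dts 0 1 sigma t v ^ 2 + sigma t v * Dts 0 2 sigma t v) + 1 * sigma t v
      + 0 * sigma t v + 0 * sigma t v)).
  rewrite RInt_lin. rewrite (intB d xi sigma H t). unfold Sf. set (b := RInt (sigma t) 0 1). ring.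
  exr H t. exr H t. exr H t. exr H t.
  intros v _. rewrite (K1 d xi sigma H t v Ht). ring.
Qed.

Lemma loc_pos t : 0 < t -> locally t (fun u => 0 < u).
Proof. intros Ht. exists (mkposreal t Ht). intros y Hy. unfold ball in Hy; simpl in Hy. unfold AbsRing_ball, abs, minus, plus, opp in Hy; simpl in Hy.
apply Rabs_def2 in Hy. lra. Qed.

Lemma dE d xi sigma (H : normalized_flow d xi sigma) t :
  is_derive (Ef d xi) t (RInt (fun v => sumd d (fun i => 2 * Dts 1 0 (xi i) t v * xi i t v)) 0 1).
Proof.
  assert (Dpt : forall u v, is_derive (fun z => sqnorm d xi z v) u (sumd d (fun i => 2 * Dts 1 0 (xi i) u v * xi i u v))).
  { intros u v. unfold sqnorm. apply (is_derive_sumd d (fun i z => xi i z v ^ 2) (fun i z => 2 * Dts 1 0 (xi i) z v * xi i z v)).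
    intros i Hi. apply (is_derive_sq (fun z => xi i z v)). pose proof H as H'; unpack H'. apply (Dts_dt (xi i) (Hxi i Hi) 0 0). }
  unfold Ef.
  replace (RInt (fun v => sumd d (fun i => 2 * Dts 1 0 (xi i) t v * xi i t v)) 0 1) with
     (RInt (fun v => Derive (fun u => sqnorm d xi u v) t) 0 1).
  apply (is_derive_RInt_param (fun u v => sqnorm d xi u v) 0 1 t).
  - apply loc_all. intros y v _. eexists. apply Dpt.
  - intros v _. apply continuity_2d_pt_ext with (fun u v => sumd d (fun i => 2 * Dts 1 0 (xi i) u v * xi i u v)).
    intros; symmetry; apply is_derive_unique, Dpt.
    pose proof H as H'; unpack H'. c2.
  - apply loc_all. intros y. apply (ex_RInt_2d (fun u v => sqnorm d xi u v)); intros; unfold sqnorm; pose proof H as H0; unpack H0; c2.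
  - apply RInt_ext'. intros; apply is_derive_unique, Dpt.
Qed.

Lemma dQ d xi sigma (H : normalized_flow d xi sigma) t :
  is_derive (Qf d xi) t (RInt (fun v => sumd d (fun i => 2 * (Dts 2 0 (xi i) t v - Dts 1 0 (xi i) t v) * (Dts 1 0 (xi i) t v - xi i t v))) 0 1).
Proof.
  assert (Dpt : forall u v, is_derive (fun z => sumd d (fun i => (Dts 1 0 (xi i) z v - xi i z v) ^ 2)) u
     (sumd d (fun i => 2 * (Dts 2 0 (xi i) u v - Dts 1 0 (xi i) u v) * (Dts 1 0 (xi i) u v - xi i u v)))).
  { intros u v. apply (is_derive_sumd d (fun i z => (Dts 1 0 (xi i) z v - xi i z v) ^ 2)
       (fun i z => 2 * (Dts 2 0 (xi i) z v - Dts 1 0 (xi i) z v) * (Dts 1 0 (xi i) z v - xi i z v))).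
    intros i Hi. apply (is_derive_sq (fun z => Dts 1 0 (xi i) z v - xi i z v)). pose proof H as H'; unpack H'.
    apply is_derive_minus'. apply (Dts_dt (xi i) (Hxi i Hi) 1 0). apply (Dts_dt (xi i) (Hxi i Hi) 0 0). }
  unfold Qf.
  replace (RInt (fun v => sumd d (fun i => 2 * (Dts 2 0 (xi i) t v - Dts 1 0 (xi i) t v) * (Dts 1 0 (xi i) t v - xi i t v))) 0 1) with
     (RInt (fun v => Derive (fun u => sumd d (fun i => (Dts 1 0 (xi i) u v - xi i u v) ^ 2)) t) 0 1).
  apply (is_derive_RInt_param (fun u v => sumd d (fun i => (Dts 1 0 (xi i) u v - xi i u v) ^ 2)) 0 1 t).
  - apply loc_all. intros y v _. eexists. apply Dpt.
  - intros v _. apply continuity_2d_pt_ext with (fun u v => sumd d (fun i => 2 * (Dts 2 0 (xi i) u v - Dts 1 0 (xi i) u v) * (Dts 1 0 (xi i) u v - xi i u v))).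
    intros; symmetry; apply is_derive_unique, Dpt.
    pose proof H as H'; unpack H'. c2.
  - apply loc_all. intros y. exr H y.
  - apply RInt_ext'. intros; apply is_derive_unique, Dpt.
Qed.

Lemma dE_val d xi sigma (H : normalized_flow d xi sigma) t : 0 <= t ->
  (RInt (fun v => sumd d (fun i => 2 * Dts 1 0 (xi i) t v * xi i t v)) 0 1 : R) = 2 * (Ef d xi t - Sf sigma t).
Proof.
  intros Ht.
  rewrite (RInt_ext' _ (fun v => 2 * sqnorm d xi t v + (-2) * sigma t v
      + 2 * (sumd d (fun i => xi i t v * (Dts 1 0 (xi i) t v - xi i t v)) + sigma t v)
      + 0 * sigma t v)).
  rewrite RInt_lin. rewrite (intA d xi sigma H t Ht). unfold Ef, Sf.
  set (a := RInt (sqnorm d xi t) 0 1). set (b := RInt (sigma t) 0 1). ring.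
  apply (ex_RInt_2d (fun u v => sqnorm d xi u v)); intros; unfold sqnorm; pose proof H as H0; unpack H0; c2. exr H t. exr H t. exr H t.
  intros v _. unfold sqnorm.
  rewrite (sumd_ext d (fun i => 2 * Dts 1 0 (xi i) t v * xi i t v) (fun i => 2 * xi i t v ^ 2 + 2 * (xi i t v * (Dts 1 0 (xi i) t v - xi i t v)))).
  rewrite !sumd_plus, !sumd_scal. ring. intros; ring.
Qed.

Lemma P1 d xi sigma (H : normalized_flow d xi sigma) t s : 0 < t ->
  sumd d (fun i => Dts 0 1 (xi i) t s * Dts 1 1 (xi i) t s) = 0.
Proof.
  intros Ht.
  assert (D1 : is_derive (fun u => sumd d (fun i => Dts 0 1 (xi i) u s ^ 2)) t
     (sumd d (fun i => 2 * Dts 1 1 (xi i) t s * Dts 0 1 (xi i) t s))).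
  { apply (is_derive_sumd d (fun i u => Dts 0 1 (xi i) u s ^ 2) (fun i u => 2 * Dts 1 1 (xi i) u s * Dts 0 1 (xi i) u s)).
    intros i Hi. apply (is_derive_sq (fun u => Dts 0 1 (xi i) u s)). pose proof H as H'; unpack H'. apply (Dts_dt (xi i) (Hxi i Hi) 0 1). }
  assert (D2 : is_derive (fun u => sumd d (fun i => Dts 0 1 (xi i) u s ^ 2)) t 0).
  { apply (is_derive_ext_loc (fun _ => 1)). generalize (loc_pos t Ht). apply filter_imp.
    intros u Hu. symmetry. apply (unit' d xi sigma H). lra. apply is_derive_cst'. }
  apply is_derive_unique in D1. apply is_derive_unique in D2. rewrite D1 in D2.
  rewrite (sumd_ext d _ (fun i => 2 * (Dts 0 1 (xi i) t s * Dts 1 1 (xi i) t s))) in D2.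
  rewrite sumd_scal in D2. lra. intros; ring.
Qed.

Lemma P2 d xi sigma (H : normalized_flow d xi sigma) t s : 0 < t ->
  sumd d (fun i => Dts 0 1 (xi i) t s * Dts 2 1 (xi i) t s) = - sumd d (fun i => Dts 1 1 (xi i) t s ^ 2).
Proof.
  intros Ht.
  assert (D1 : is_derive (fun u => sumd d (fun i => Dts 0 1 (xi i) u s * Dts 1 1 (xi i) u s)) t
     (sumd d (fun i => Dts 1 1 (xi i) t s * Dts 1 1 (xi i) t s + Dts 0 1 (xi i) t s * Dts 2 1 (xi i) t s))).
  { apply (is_derive_sumd d (fun i u => Dts 0 1 (xi i) u s * Dts 1 1 (xi i) u s)
       (fun i u => Dts 1 1 (xi i) u s * Dts 1 1 (xi i) u s + Dts 0 1 (xi i) u s * Dts 2 1 (xi i) u s)).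
    intros i Hi. pose proof H as H'; unpack H'. apply (is_derive_mult' (fun u => Dts 0 1 (xi i) u s) (fun u => Dts 1 1 (xi i) u s)).
    apply (Dts_dt (xi i) (Hxi i Hi) 0 1). apply (Dts_dt (xi i) (Hxi i Hi) 1 1). }
  assert (D2 : is_derive (fun u => sumd d (fun i => Dts 0 1 (xi i) u s * Dts 1 1 (xi i) u s)) t 0).
  { apply (is_derive_ext_loc (fun _ => 0)). generalize (loc_pos t Ht). apply filter_imp.
    intros u Hu. symmetry. apply (P1 d xi sigma H). lra. apply is_derive_cst'. }
  apply is_derive_unique in D1. apply is_derive_unique in D2. rewrite D1 in D2.
  rewrite sumd_plus in D2.
  rewrite (sumd_ext d (fun i => Dts 1 1 (xi i) t s * Dts 1 1 (xi i) t s) (fun i => Dts 1 1 (xi i) t s ^ 2)) in D2 by (intros; ring).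
  lra.
Qed.

Lemma maxp (g g1 g2 k : R -> R) :
  (forall x, is_derive g x (g1 x)) -> (forall x, is_derive g1 x (g2 x)) ->
  (forall x, g (x + 1) = g x) -> (forall x, 0 <= k x) -> (forall x, g2 x = g x * k x - 1) ->
  forall s, 0 <= s <= 1 -> 0 <= g s.
Proof.
  intros D1 D2 Hp Hk He.
  assert (Cg : forall x, continuity_pt g x).
  { intros x. apply continuity_pt_filterlim. apply (ex_derive_continuous (K:=R_AbsRing) (V:=R_NormedModule)). eexists; apply D1. }
  destruct (continuity_ab_min g 0 1) as [mx [Hmin Hmx]]. lra. intros; apply Cg.
  assert (Hmin2 : forall c, -1 <= c <= 2 -> g mx <= g c).
  { intros c Hc. destruct (Rlt_le_dec c 0).
    rewrite <- (Hp c). apply Hmin. lra.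
    destruct (Rle_lt_dec c 1). apply Hmin. lra.
    replace c with ((c - 1) + 1) by ring. rewrite Hp. apply Hmin. lra. }
  assert (Hpos : 0 < g mx).
  { destruct (Rlt_le_dec 0 (g mx)) as [hh|hh]. exact hh. exfalso.
    assert (Hg2 : g2 mx < 0). { rewrite He. specialize (Hk mx). nra. }
    assert (Hg1 : g1 mx = 0).
    { pose (pr := exist (fun l => derivable_pt_abs g mx l) (g1 mx) (proj1 (is_derive_Reals g mx (g1 mx)) (D1 mx))).
      assert (E := deriv_minimum g (-1) 2 mx pr ltac:(lra) ltac:(lra) ltac:(intros; apply Hmin2; lra)).
      exact E. }
    pose proof (proj1 (is_derive_Reals g1 mx (g2 mx)) (D2 mx)) as L.
    destruct (L (- g2 mx / 2) ltac:(lra)) as [dl Hdl].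
    set (h := Rmin (dl / 2) (1 / 2)).
    assert (Hh : 0 < h /\ h <= dl / 2 /\ h <= 1/2).
    { unfold h. split. apply Rmin_glb_lt. destruct dl; simpl; lra. lra. split; [apply Rmin_l | apply Rmin_r]. }
    destruct (MVT_cor2 g g1 mx (mx + h)) as [c [Hc1 Hc2]]. lra.
    intros c _. apply is_derive_Reals. apply D1.
    set (h' := c - mx).
    assert (Hh' : 0 < h' < dl). { unfold h'. destruct dl; simpl in *; lra. }
    specialize (Hdl h' ltac:(lra) ltac:(rewrite Rabs_right; lra)).
    replace (mx + h') with c in Hdl by (unfold h'; ring).
    rewrite Hg1 in Hdl. apply Rabs_def2 in Hdl.
    assert (g1 c / h' < 0) by lra.
    assert (g1 c < 0).
    { destruct (Rlt_le_dec (g1 c) 0). auto. exfalso. assert (0 <= g1 c / h'). unfold Rdiv. apply Rmult_le_pos. auto.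
      left; apply Rinv_0_lt_compat; lra. lra. }
    assert (g (mx + h) < g mx) by nra.
    assert (g mx <= g (mx + h)) by (apply Hmin2; lra). lra. }
  intros s Hs. specialize (Hmin s Hs). lra.
Qed.

Lemma sig_nonneg d xi sigma (H : normalized_flow d xi sigma) t s : 0 <= t -> 0 <= s <= 1 -> 0 <= sigma t s.
Proof.
  intros Ht Hs. pose proof H as H'; unpack H'.
  apply (maxp (fun v => sigma t v) (fun v => Dts 0 1 sigma t v) (fun v => Dts 0 2 sigma t v)
     (fun v => sumd d (fun i => Dts 0 2 (xi i) t v ^ 2))); auto.
  intros x. apply (Dts_ds sigma Hsg 0 0).
  intros x. apply (Dts_ds sigma Hsg 0 1).
  intros x. apply sumd_ge0. intros; apply pow2_ge_0.
  intros x. apply (sig_eq d xi sigma H t x Ht).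
Qed.

Lemma intC d xi sigma (H : normalized_flow d xi sigma) t :
  RInt (fun v => Dts 0 1 sigma t v * sumd d (fun i => Dts 0 1 (xi i) t v * (Dts 2 0 (xi i) t v - Dts 1 0 (xi i) t v))
     + sigma t v * sumd d (fun i => Dts 0 2 (xi i) t v * (Dts 2 0 (xi i) t v - Dts 1 0 (xi i) t v)
         + Dts 0 1 (xi i) t v * (Dts 2 1 (xi i) t v - Dts 1 1 (xi i) t v))) 0 1 = 0.
Proof.
  pose proof H as H'; unpack H'.
  apply (int_deriv_per (fun u v => sigma u v * sumd d (fun i => Dts 0 1 (xi i) u v * (Dts 2 0 (xi i) u v - Dts 1 0 (xi i) u v)))
    (fun u v => Dts 0 1 sigma u v * sumd d (fun i => Dts 0 1 (xi i) u v * (Dts 2 0 (xi i) u v - Dts 1 0 (xi i) u v))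
     + sigma u v * sumd d (fun i => Dts 0 2 (xi i) u v * (Dts 2 0 (xi i) u v - Dts 1 0 (xi i) u v)
         + Dts 0 1 (xi i) u v * (Dts 2 1 (xi i) u v - Dts 1 1 (xi i) u v)))).
  - intros v. apply (is_derive_mult' (fun w => sigma t w)). apply (Dts_ds sigma Hsg 0 0).
    apply (is_derive_sumd d (fun i w => Dts 0 1 (xi i) t w * (Dts 2 0 (xi i) t w - Dts 1 0 (xi i) t w))
      (fun i w => Dts 0 2 (xi i) t w * (Dts 2 0 (xi i) t w - Dts 1 0 (xi i) t w)
         + Dts 0 1 (xi i) t w * (Dts 2 1 (xi i) t w - Dts 1 1 (xi i) t w))).
    intros i Hi. apply (is_derive_mult' (fun w => Dts 0 1 (xi i) t w) (fun w => Dts 2 0 (xi i) t w - Dts 1 0 (xi i) t w)).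
    apply (Dts_ds (xi i) (Hxi i Hi) 0 1).
    apply (is_derive_minus' (fun w => Dts 2 0 (xi i) t w) (fun w => Dts 1 0 (xi i) t w)).
    apply (Dts_ds (xi i) (Hxi i Hi) 2 0). apply (Dts_ds (xi i) (Hxi i Hi) 1 0).
  - intros v. c2.
  - pose proof (sg_per01 d xi sigma H 0 0 t) as E0. simpl in E0. cbv beta. rewrite E0. f_equal.
    apply sumd_ext. intros i Hi.
    rewrite (xi_per01 d xi sigma H i 0 1 t Hi), (xi_per01 d xi sigma H i 2 0 t Hi), (xi_per01 d xi sigma H i 1 0 t Hi).
    reflexivity.
Qed.

Lemma dQ_nonneg d xi sigma (H : normalized_flow d xi sigma) t : 0 < t ->
  0 <= RInt (fun v => sumd d (fun i => 2 * (Dts 2 0 (xi i) t v - Dts 1 0 (xi i) t v) * (Dts 1 0 (xi i) t v - xi i t v))) 0 1.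
Proof.
  intros Ht.
  rewrite (RInt_ext' _ (fun v => 2 * (Dts 0 1 sigma t v * sumd d (fun i => Dts 0 1 (xi i) t v * (Dts 2 0 (xi i) t v - Dts 1 0 (xi i) t v))
     + sigma t v * sumd d (fun i => Dts 0 2 (xi i) t v * (Dts 2 0 (xi i) t v - Dts 1 0 (xi i) t v)
         + Dts 0 1 (xi i) t v * (Dts 2 1 (xi i) t v - Dts 1 1 (xi i) t v)))
     + 2 * (sigma t v * sumd d (fun i => Dts 1 1 (xi i) t v ^ 2)) + 0 * sigma t v + 0 * sigma t v)).
  rewrite RInt_lin. rewrite (intC d xi sigma H t).
  assert (0 <= RInt (fun v => sigma t v * sumd d (fun i => Dts 1 1 (xi i) t v ^ 2)) 0 1).
  { apply RInt_ge_0. lra. exr H t. intros x Hx. apply Rmult_le_pos.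
    apply (sig_nonneg d xi sigma H); lra. apply sumd_ge0; intros; apply pow2_ge_0. }
  lra.
  exr H t. exr H t. exr H t. exr H t.
  intros v _.
  rewrite (sumd_ext d (fun i => 2 * (Dts 2 0 (xi i) t v - Dts 1 0 (xi i) t v) * (Dts 1 0 (xi i) t v - xi i t v))
     (fun i => (2 * Dts 0 1 sigma t v) * (Dts 0 1 (xi i) t v * (Dts 2 0 (xi i) t v - Dts 1 0 (xi i) t v))
            + (2 * sigma t v) * (Dts 0 2 (xi i) t v * (Dts 2 0 (xi i) t v - Dts 1 0 (xi i) t v)))).
  2: { intros i Hi. rewrite (flowV d xi sigma H i t v Hi); [ring | lra]. }
  rewrite sumd_plus, !sumd_scal.
  rewrite sumd_plus.
  rewrite (sumd_ext d (fun i => Dts 0 1 (xi i) t v * (Dts 2 1 (xi i) t v - Dts 1 1 (xi i) t v))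
     (fun i => Dts 0 1 (xi i) t v * Dts 2 1 (xi i) t v - Dts 0 1 (xi i) t v * Dts 1 1 (xi i) t v)) by (intros; ring).
  rewrite sumd_minus. rewrite (P2 d xi sigma H t v Ht), (P1 d xi sigma H t v Ht). ring.
Qed.

Lemma ex_RInt_on (f : R -> R) a b : a <= b -> (forall x, a <= x <= b -> continuous f x) -> ex_RInt f a b.
Proof. intros Hab H. apply (@ex_RInt_continuous R_CompleteNormedModule). intros z Hz.
  rewrite Rmin_left, Rmax_right in Hz by lra. apply H; auto. Qed.

Lemma cont_sq (f : R -> R) x : continuous f x -> continuous (fun y => f y ^ 2) x.
Proof. intros H. apply continuous_ext with (fun y => f y * f y). intros; simpl; ring.
  apply (continuous_mult f f); auto. Qed.

Ltac toR := match goal with |- @eq _ ?x ?y => change (@eq R x y) end.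

Lemma dirichlet_w (g g' : R -> R) a L dl : 0 < L -> 0 < dl ->
  (forall x, is_derive g x (g' x)) -> (forall x, continuous g' x) ->
  g a = 0 -> g (a + L) = 0 ->
  (PI / (L + 2 * dl)) ^ 2 * RInt (fun x => g x ^ 2) a (a + L) <= RInt (fun x => g' x ^ 2) a (a + L).
Proof.
  intros HL Hdl Hg Hg' Ha Hb.
  set (w := PI / (L + 2 * dl)).
  assert (Hw : 0 < w). { unfold w. apply Rdiv_lt_0_compat. apply PI_RGT_0. lra. }
  set (th := fun x => w * (x - a + dl)).
  assert (Hsin : forall x, a <= x <= a + L -> 0 < sin (th x)).
  { intros x Hx. apply sin_gt_0. unfold th. apply Rmult_lt_0_compat; lra.
    unfold th, w.
    replace (PI / (L + 2*dl) * (x - a + dl)) with (PI * ((x - a + dl) / (L + 2*dl))) by (field; lra).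
    assert ((x - a + dl) / (L + 2 * dl) < 1).
    { apply (Rmult_lt_reg_r (L+2*dl)). lra. unfold Rdiv. rewrite Rmult_assoc, Rinv_l; lra. }
    pose proof PI_RGT_0. nra. }
  set (phi := fun x => w * cos (th x) / sin (th x)).
  set (dPhi := fun x => - (w ^ 2 + phi x ^ 2) * g x ^ 2 + 2 * phi x * g x * g' x).
  assert (HD : forall x, a <= x <= a + L -> is_derive (fun s => phi s * g s ^ 2) x (dPhi x)).
  { intros x Hx. specialize (Hsin x Hx). unfold phi, dPhi, th in *. auto_derive.
    replace (x + - a + dl) with (x - a + dl) by ring.
    split. lra. split. eexists; apply Hg. exact I.
    replace (x + - a + dl) with (x - a + dl) by ring.
    replace (Derive (fun x0 => g x0) x) with (g' x) by (symmetry; apply is_derive_unique; apply Hg). toR. unfold phi. field. lra. }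
  assert (Cth : forall x, continuous th x).
  { intros x. unfold th. apply (continuous_scal_r w (fun x => x - a + dl)).
    apply (continuous_plus (fun x => x - a) (fun _ => dl)). apply (continuous_minus (fun x => x) (fun _ => a)).
    apply continuous_id. apply continuous_const. apply continuous_const. }
  assert (Cg : forall x, continuous g x).
  { intros x. apply (ex_derive_continuous (K:=R_AbsRing) (V:=R_NormedModule)). eexists; apply Hg. }
  assert (Cphi : forall x, a <= x <= a + L -> continuous phi x).
  { intros x Hx. unfold phi. apply (continuous_mult (fun x => w * cos (th x)) (fun x => / sin (th x))).
    apply (continuous_scal_r w (fun x => cos (th x))). apply (continuous_comp th cos). apply Cth.
    apply continuity_pt_filterlim. apply continuity_cos.
    apply (continuous_comp (fun x => sin (th x)) Rinv). apply (continuous_comp th sin). apply Cth.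
    apply continuity_pt_filterlim. apply continuity_sin.
    apply continuity_pt_filterlim. apply continuity_pt_inv. apply continuity_pt_id. specialize (Hsin x Hx). lra. }
  assert (Cd : forall x, a <= x <= a + L -> continuous dPhi x).
  { intros x Hx. unfold dPhi.
    apply (continuous_plus (fun x => - (w ^ 2 + phi x ^ 2) * g x ^ 2) (fun x => 2 * phi x * g x * g' x)).
    apply (continuous_mult (fun x => - (w ^ 2 + phi x ^ 2)) (fun x => g x ^ 2)).
    apply (continuous_opp (fun x => w ^ 2 + phi x ^ 2)).
    apply (continuous_plus (fun _ => w ^ 2) (fun x => phi x ^ 2)). apply continuous_const. apply cont_sq; auto.
    apply cont_sq; auto.
    apply (continuous_mult (fun x => 2 * phi x * g x) g'); auto.
    apply (continuous_mult (fun x => 2 * phi x) g); auto.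
    apply (continuous_mult (fun _ => 2) phi); auto. apply continuous_const. }
  assert (I0 : RInt dPhi a (a + L) = 0).
  { rewrite (RInt_deriv (fun s => phi s * g s ^ 2) dPhi).
    rewrite Ha, Hb. toR. ring.
    intros x Hx. rewrite Rmin_left, Rmax_right in Hx by lra. apply HD; auto.
    intros x Hx. rewrite Rmin_left, Rmax_right in Hx by lra. apply Cd; auto. }
  assert (E1 : ex_RInt (fun x => g x ^ 2) a (a + L)).
  { apply ex_RInt_on. lra. intros; apply cont_sq; auto. }
  assert (E2 : ex_RInt (fun x => g' x ^ 2) a (a + L)).
  { apply ex_RInt_on. lra. intros; apply cont_sq; auto. }
  assert (E3 : ex_RInt dPhi a (a + L)).
  { apply ex_RInt_on. lra. auto. }
  assert (P : 0 <= RInt (fun x => (g' x - phi x * g x) ^ 2) a (a + L)).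
  { apply RInt_ge_0. lra. apply ex_RInt_on. lra. intros x Hx. apply cont_sq.
    apply (continuous_minus g' (fun x => phi x * g x)). auto.
    apply (continuous_mult phi g); auto.
    intros; apply pow2_ge_0. }
  rewrite (RInt_ext (fun x => (g' x - phi x * g x) ^ 2) (fun x => (g' x ^ 2 - w ^ 2 * g x ^ 2) - dPhi x)) in P.
  rewrite RInt_minus' in P; auto. rewrite RInt_minus' in P; auto. rewrite RInt_scal' in P; auto.
  rewrite I0 in P. fold w. lra.
  apply (ex_RInt_scal (V:=R_NormedModule) (fun x => g x ^ 2)); auto.
  apply (ex_RInt_minus (V:=R_NormedModule) (fun x => g' x ^ 2) (fun x => w ^ 2 * g x ^ 2)); auto.
  apply (ex_RInt_scal (V:=R_NormedModule) (fun x => g x ^ 2)); auto.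
  intros x _. unfold dPhi. toR. ring.
Qed.

Lemma lim_dl (A B L : R) : 0 < L -> 0 <= B -> (forall dl, 0 < dl -> (PI / (L + 2 * dl)) ^ 2 * A <= B) ->
  PI ^ 2 * A <= L ^ 2 * B.
Proof.
  intros HL HB H.
  assert (H' : forall dl, 0 < dl -> PI ^ 2 * A <= (L + 2 * dl) ^ 2 * B).
  { intros dl Hdl. specialize (H dl Hdl).
    replace (PI ^ 2 * A) with ((L + 2 * dl) ^ 2 * ((PI / (L + 2 * dl)) ^ 2 * A)) by (field; lra).
    apply Rmult_le_compat_l. apply pow2_ge_0. auto. }
  destruct (Rle_lt_dec (PI ^ 2 * A) (L ^ 2 * B)) as [h|h]; auto. exfalso.
  set (e := PI ^ 2 * A - L ^ 2 * B).
  set (dl := Rmin 1 (e / (2 * ((4 * L + 4) * B + 1)))).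
  assert (Hd1 : 0 < dl).
  { unfold dl. apply Rmin_glb_lt. lra. apply Rdiv_lt_0_compat. unfold e; lra. nra. }
  assert (Hd2 : dl <= 1) by apply Rmin_l.
  assert (Hd3 : dl * (2 * ((4 * L + 4) * B + 1)) <= e).
  { assert (dl <= e / (2 * ((4 * L + 4) * B + 1))) by apply Rmin_r.
    assert (0 < 2 * ((4 * L + 4) * B + 1)) by nra.
    apply (Rmult_le_compat_r (2 * ((4 * L + 4) * B + 1))) in H0; [|lra].
    unfold Rdiv in H0. rewrite Rmult_assoc, Rinv_l in H0; lra. }
  specialize (H' dl Hd1).
  assert ((L + 2 * dl) ^ 2 * B <= L ^ 2 * B + (4 * L + 4) * B * dl) by nra.
  unfold e in Hd3. nra.
Qed.

Lemma dirichlet (g g' : R -> R) a L : 0 < L ->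
  (forall x, is_derive g x (g' x)) -> (forall x, continuous g' x) ->
  g a = 0 -> g (a + L) = 0 ->
  PI ^ 2 * RInt (fun x => g x ^ 2) a (a + L) <= L ^ 2 * RInt (fun x => g' x ^ 2) a (a + L).
Proof.
  intros HL Hg Hg' Ha Hb. apply lim_dl; auto.
  apply RInt_ge_0. lra. apply ex_RInt_on. lra. intros; apply cont_sq; auto. intros; apply pow2_ge_0.
  intros dl Hdl. apply dirichlet_w; auto.
Qed.

Lemma cont_shift (F : R -> R) c x : (forall y, continuous F y) -> continuous (fun y => F (y + c)) x.
Proof.
  intros H. apply (continuous_comp (fun y => y + c) F). 2: apply H.
  apply (continuous_plus (fun y => y) (fun _ => c)). apply continuous_id. apply continuous_const.
Qed.

Lemma int_shift (F : R -> R) b c v : (forall x, continuous F x) ->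
  RInt (fun y => F (y + v)) b c = RInt F (b + v) (c + v).
Proof.
  intros H. rewrite <- (Rmult_1_l b) at 2. rewrite <- (Rmult_1_l c) at 2.
  rewrite <- (RInt_comp_lin F 1 v b c). apply RInt_ext'. intros; unfold scal; simpl; unfold mult; simpl. rewrite !Rmult_1_l. reflexivity.
  ring_simplify.
  apply ex_RInt_c; auto.
Qed.

Lemma split01 (F : R -> R) : (forall x, continuous F x) ->
  RInt F 0 1 = RInt (fun y => F y + F (y + 1/2)) 0 (1/2).
Proof.
  intros H. rewrite RInt_plus'. rewrite int_shift; auto.
  replace (0 + 1/2) with (1/2) by ring. replace (1/2 + 1/2) with 1 by field.
  rewrite <- (RInt_Chasles (V:=R_CompleteNormedModule) F 0 (1/2) 1). reflexivity.
  apply ex_RInt_c; auto. apply ex_RInt_c; auto. apply ex_RInt_c; auto.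
  apply ex_RInt_c. intros; apply cont_shift; auto.
Qed.

Lemma shift_half (P : R -> R) a : (forall x, continuous P x) -> (forall x, P (x + 1/2) = P x) ->
  0 <= a <= 1/2 -> RInt P a (a + 1/2) = RInt P 0 (1/2).
Proof.
  intros HC HP Ha.
  rewrite <- (RInt_Chasles (V:=R_CompleteNormedModule) P a (1/2) (a + 1/2)).
  2,3: apply ex_RInt_c; auto.
  replace (RInt P (1/2) (a + 1/2)) with (RInt P 0 a).
  rewrite <- (RInt_Chasles (V:=R_CompleteNormedModule) P 0 a (1/2)).
  2,3: apply ex_RInt_c; auto.
  unfold plus; simpl. ring.
  replace (1/2) with (0 + 1/2) at 1 by ring.
  rewrite <- int_shift; auto. apply RInt_ext'. intros; symmetry; auto.
Qed.

Lemma is_derive_shift (g : R -> R) c x l : is_derive g (x + c) l -> is_derive (fun v => g (v + c)) x l.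
Proof.
  intros H. replace l with (scal 1 l) by (unfold scal; simpl; unfold mult; simpl; ring).
  apply (is_derive_comp g (fun v => v + c)). exact H.
  auto_derive; try exact I; try ring.
Qed.

Lemma half_wirt (p p' : R -> R) a :
  (forall x, is_derive p x (p' x)) -> (forall x, continuous p' x) ->
  (forall x, p (x + 1/2) ^ 2 = p x ^ 2) -> (forall x, p' (x + 1/2) ^ 2 = p' x ^ 2) ->
  0 <= a <= 1/2 -> p a = 0 -> p (a + 1/2) = 0 ->
  4 * PI ^ 2 * RInt (fun x => p x ^ 2) 0 (1/2) <= RInt (fun x => p' x ^ 2) 0 (1/2).
Proof.
  intros D C P1 P2 Ha Z1 Z2.
  assert (Cp : forall x, continuous p x).
  { intros x. apply (ex_derive_continuous (K:=R_AbsRing) (V:=R_NormedModule)). eexists; apply D. }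
  pose proof (dirichlet p p' a (1/2) ltac:(lra) D C Z1 Z2) as H.
  rewrite !(shift_half (fun x => _ ^ 2)) in H; auto.
  lra.
  intros; apply cont_sq; auto.
  intros; apply cont_sq; auto.
Qed.

Lemma cont_half_minus (F G : R -> R) x : continuous F x -> continuous G x -> continuous (fun y => (F y - G y) / 2) x.
Proof. intros. apply (continuous_mult (fun y => F y - G y) (fun _ => / 2)).
  apply (continuous_minus F G); auto. apply continuous_const. Qed.
Lemma cont_half_plus (F G : R -> R) x : continuous F x -> continuous G x -> continuous (fun y => (F y + G y) / 2) x.
Proof. intros. apply (continuous_mult (fun y => F y + G y) (fun _ => / 2)).
  apply (continuous_plus F G); auto. apply continuous_const. Qed.

Lemma is_derive_half_minus (F G : R -> R) x a b : is_derive F x a -> is_derive G x b ->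
  is_derive (fun y => (F y - G y) / 2) x ((a - b) / 2).
Proof. intros. apply is_derive_ext' with (fun y => (F y - G y) * / 2). intros; reflexivity.
  replace ((a - b) / 2) with ((a - b) * / 2 + (F x - G x) * 0) by (unfold Rdiv; ring).
  apply (is_derive_mult' (fun y => F y - G y) (fun _ => / 2)). apply is_derive_minus'; auto. apply is_derive_cst'. Qed.
Lemma is_derive_half_plus (F G : R -> R) x a b : is_derive F x a -> is_derive G x b ->
  is_derive (fun y => (F y + G y) / 2) x ((a + b) / 2).
Proof. intros. apply is_derive_ext' with (fun y => (F y + G y) * / 2). intros; reflexivity.
  replace ((a + b) / 2) with ((a + b) * / 2 + (F x + G x) * 0) by (unfold Rdiv; ring).
  apply (is_derive_mult' (fun y => F y + G y) (fun _ => / 2)). apply is_derive_plus'; auto. apply is_derive_cst'. Qed.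

Lemma cont_Stdlib (F : R -> R) : (forall x, continuous F x) -> continuity F.
Proof. intros H x. apply continuity_pt_filterlim. apply H. Qed.

Lemma wirtinger (f f' : R -> R) :
  (forall x, is_derive f x (f' x)) -> (forall x, continuous f' x) ->
  (forall x, f (x + 1) = f x) -> RInt f 0 1 = 0 ->
  4 * PI ^ 2 * RInt (fun x => f x ^ 2) 0 1 <= RInt (fun x => f' x ^ 2) 0 1.
Proof.
  intros D C Hp Hm.
  assert (Cf : forall x, continuous f x).
  { intros x. apply (ex_derive_continuous (K:=R_AbsRing) (V:=R_NormedModule)). eexists; apply D. }
  assert (Hp' : forall x, f' (x + 1) = f' x).
  { intros x. assert (is_derive f x (f' (x + 1))).
    { apply is_derive_ext' with (fun v => f (v + 1)). intros; apply Hp. apply is_derive_shift. apply D. }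
    apply is_derive_unique in H. rewrite (is_derive_unique _ _ _ (D x)) in H. auto. }
  assert (hh : forall x, x + 1/2 + 1/2 = x + 1) by (intros; field).
  set (h := fun x => (f x - f (x + 1/2)) / 2). set (h' := fun x => (f' x - f' (x + 1/2)) / 2).
  set (k := fun x => (f x + f (x + 1/2)) / 2). set (k' := fun x => (f' x + f' (x + 1/2)) / 2).
  assert (Dh : forall x, is_derive h x (h' x)).
  { intros x. apply (is_derive_half_minus f (fun y => f (y + 1/2))). auto. apply is_derive_shift. auto. }
  assert (Dk : forall x, is_derive k x (k' x)).
  { intros x. apply (is_derive_half_plus f (fun y => f (y + 1/2))). auto. apply is_derive_shift. auto. }
  assert (Ch' : forall x, continuous h' x).
  { intros x. apply (cont_half_minus f' (fun y => f' (y + 1/2))); auto. apply cont_shift; auto. }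
  assert (Ck' : forall x, continuous k' x).
  { intros x. apply (cont_half_plus f' (fun y => f' (y + 1/2))); auto. apply cont_shift; auto. }
  assert (Ch : forall x, continuous h x).
  { intros x. apply (cont_half_minus f (fun y => f (y + 1/2))); auto. apply cont_shift; auto. }
  assert (Ck : forall x, continuous k x).
  { intros x. apply (cont_half_plus f (fun y => f (y + 1/2))); auto. apply cont_shift; auto. }
  assert (Ah : forall x, h (x + 1/2) = - h x). { intros; unfold h. rewrite hh, Hp. field. }
  assert (Ah' : forall x, h' (x + 1/2) = - h' x). { intros; unfold h'. rewrite hh, Hp'. field. }
  assert (Ak : forall x, k (x + 1/2) = k x). { intros; unfold k. rewrite hh, Hp. field. }
  assert (Ak' : forall x, k' (x + 1/2) = k' x). { intros; unfold k'. rewrite hh, Hp'. field. }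
  destruct (IVT_cor h 0 (1/2) (cont_Stdlib h Ch) ltac:(lra)) as [a [Ha Za]].
  { replace (1/2) with (0 + 1/2) by ring. rewrite Ah. nra. }
  assert (Hh : 4 * PI ^ 2 * RInt (fun x => h x ^ 2) 0 (1/2) <= RInt (fun x => h' x ^ 2) 0 (1/2)).
  { apply (half_wirt h h' a); auto. intros; rewrite Ah; ring. intros; rewrite Ah'; ring. rewrite Ah, Za; ring. }
  assert (Ik : RInt k 0 (1/2) = 0).
  { unfold k. rewrite (RInt_ext' _ (fun y => / 2 * (f y + f (y + 1/2)))) by (intros; unfold Rdiv; ring).
    rewrite RInt_scal'. rewrite <- split01; auto. rewrite Hm. toR. ring.
    apply ex_RInt_c. intros; apply (continuous_plus f (fun y => f (y + 1/2))); auto. apply cont_shift; auto. }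
  destruct (continuity_ab_min k 0 (1/2)) as [pm [Hpm1 Hpm2]]. lra. intros; apply cont_Stdlib; auto.
  destruct (continuity_ab_maj k 0 (1/2)) as [qm [Hqm1 Hqm2]]. lra. intros; apply cont_Stdlib; auto.
  assert (kp : k pm <= 0).
  { destruct (Rle_lt_dec (k pm) 0) as [r|r]; auto. exfalso.
    assert (RInt (fun _ => k pm) 0 (1/2) <= RInt k 0 (1/2)).
    { apply RInt_le. lra. apply ex_RInt_c; intros; apply continuous_const. apply ex_RInt_c; auto.
      intros; apply Hpm1; lra. }
    rewrite RInt_const, Ik in H. unfold scal in H; simpl in H; unfold mult in H; simpl in H. lra. }
  assert (kq : 0 <= k qm).
  { destruct (Rle_lt_dec 0 (k qm)) as [r|r]; auto. exfalso.
    assert (RInt k 0 (1/2) <= RInt (fun _ => k qm) 0 (1/2)).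
    { apply RInt_le. lra. apply ex_RInt_c; auto. apply ex_RInt_c; intros; apply continuous_const.
      intros; apply Hqm1; lra. }
    rewrite RInt_const, Ik in H. unfold scal in H; simpl in H; unfold mult in H; simpl in H. lra. }
  destruct (IVT_gen k pm qm 0 (cont_Stdlib k Ck)) as [b [Hb Zb]].
  { split. apply Rle_trans with (k pm). apply Rmin_l. auto. apply Rle_trans with (k qm). auto. apply Rmax_r. }
  assert (Hb' : 0 <= b <= 1/2).
  { split. apply Rle_trans with (Rmin pm qm). apply Rmin_glb; lra. lra.
    apply Rle_trans with (Rmax pm qm). lra. apply Rmax_lub; lra. }
  assert (Hk : 4 * PI ^ 2 * RInt (fun x => k x ^ 2) 0 (1/2) <= RInt (fun x => k' x ^ 2) 0 (1/2)).
  { apply (half_wirt k k' b); auto. intros; rewrite Ak; ring. intros; rewrite Ak'; ring. rewrite Ak, Zb; ring. }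
  rewrite (split01 (fun x => f x ^ 2)), (split01 (fun x => f' x ^ 2)).
  rewrite (RInt_ext' (fun y => f y ^ 2 + f (y + 1/2) ^ 2) (fun y => 2 * h y ^ 2 + 2 * k y ^ 2)).
  rewrite (RInt_ext' (fun y => f' y ^ 2 + f' (y + 1/2) ^ 2) (fun y => 2 * h' y ^ 2 + 2 * k' y ^ 2)).
  rewrite !RInt_plus', !RInt_scal'. lra.
  all: try (apply ex_RInt_c; intros; apply cont_sq; auto).
  all: try (apply (ex_RInt_scal (V:=R_NormedModule) (fun x => _ ^ 2)); apply ex_RInt_c; intros; apply cont_sq; auto).
  all: try (intros; unfold h, k, h', k'; field).
  all: try (intros; apply cont_sq; auto).
Qed.

Lemma mvt_lower (F dF : R -> R) a b m : a <= b -> (forall x, is_derive F x (dF x)) ->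
  (forall x, a < x < b -> m <= dF x) -> m * (b - a) <= F b - F a.
Proof.
  intros Hab D Hm. destruct (Req_dec a b) as [e|ne]. subst. lra.
  destruct (MVT_cor2 F dF a b) as [c [Hc1 Hc2]]. lra.
  intros c _. apply is_derive_Reals. apply D.
  rewrite Hc1. apply Rmult_le_compat_r. lra. apply Hm; auto.
Qed.

Lemma mvt_nonneg (F dF : R -> R) t1 t2 : 0 <= t1 <= t2 -> (forall x, is_derive F x (dF x)) ->
  (forall x, 0 < x -> 0 <= dF x) -> F t1 <= F t2.
Proof.
  intros H D P. assert (0 * (t2 - t1) <= F t2 - F t1). apply (mvt_lower F dF); auto. lra.
  intros; apply P; lra. lra.
Qed.

Lemma mono_lim (F : R -> R) B : (forall t1 t2, 0 <= t1 -> t1 <= t2 -> F t1 <= F t2) ->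
  (forall t, 0 <= t -> F t <= B) ->
  exists L : R, is_lim F p_infty L /\ (forall t, 0 <= t -> F t <= L) /\
    (forall eps, 0 < eps -> exists T, 0 <= T /\ L - eps < F T) /\
    (forall U, (forall t, 0 <= t -> F t <= U) -> L <= U).
Proof.
  intros Hm HB.
  set (Es := fun y => exists t, 0 <= t /\ y = F t).
  destruct (completeness Es) as [L [Hub Hlub]].
  { exists B. intros y [t [Ht ->]]. auto. }
  { exists (F 0). exists 0. split; [lra | reflexivity]. }
  assert (Hle : forall t, 0 <= t -> F t <= L). { intros t Ht. apply Hub. exists t; auto. }
  assert (Happ : forall eps, 0 < eps -> exists T, 0 <= T /\ L - eps < F T).
  { intros eps He. destruct (Classical_Prop.classic (exists T, 0 <= T /\ L - eps < F T)) as [h|h]; auto.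
    exfalso. assert (L <= L - eps). apply Hlub. intros y [t [Ht ->]].
    destruct (Rle_lt_dec (F t) (L - eps)) as [r|r]; auto. exfalso; apply h; exists t; auto. lra. }
  exists L. split; [|split; [auto|split; [auto|]]].
  - apply is_lim_spec. intros eps. destruct (Happ eps (cond_pos eps)) as [T [HT HFT]].
    exists T. intros x Hx. assert (F T <= F x) by (apply Hm; lra). assert (F x <= L) by (apply Hle; lra).
    apply Rabs_def1; lra.
  - intros U HU. apply Hlub. intros y [t [Ht ->]]. auto.
Qed.

Lemma E_bound d xi sigma (H : normalized_flow d xi sigma) t : 0 <= t -> Ef d xi t <= 1 / (4 * PI ^ 2).
Proof.
  intros Ht. pose proof H as H'; destruct H' as (Hxi0 & _ & Hpx0 & _ & _ & Hmean0 & _ & _).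
  assert (Hpi : 0 < 4 * PI ^ 2). { pose proof PI_RGT_0. nra. }
  assert (4 * PI ^ 2 * Ef d xi t <= 1).
  { unfold Ef, sqnorm. rewrite (RInt_sumd d (fun i s => xi i t s ^ 2)).
    rewrite <- sumd_scal.
    apply Rle_trans with (sumd d (fun i => RInt (fun s => Dts 0 1 (xi i) t s ^ 2) 0 1)).
    apply sumd_le. intros i Hi. apply (wirtinger (fun s => xi i t s) (fun s => Dts 0 1 (xi i) t s)).
    intros x. apply (Dts_ds (xi i) (Hxi0 i Hi) 0 0).
    intros x. apply cont_2d. apply Dts_c. auto.
    intros x. apply Hpx0; auto. apply Hmean0; auto.
    rewrite <- (RInt_sumd d (fun i s => Dts 0 1 (xi i) t s ^ 2)).
    rewrite (RInt_ext' _ (fun _ => 1)). rewrite RInt_const. unfold scal; simpl; unfold mult; simpl. lra.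
    intros x _. apply (unit' d xi sigma H); auto.
    intros i Hi. exr H t.
    intros i Hi. exr H t. }
  apply (Rmult_le_reg_l (4 * PI ^ 2)); auto. replace (4 * PI ^ 2 * (1 / (4 * PI ^ 2))) with 1 by (field; pose proof PI_RGT_0; lra). auto.
Qed.

Lemma main_thm d xi sigma (H : normalized_flow d xi sigma) :
  ((forall t1 t2, 0 <= t1 -> t1 <= t2 -> Ef d xi t1 <= Ef d xi t2) /\
   (forall t, 0 <= t -> Ef d xi t <= 1 / (4 * PI ^ 2))) /\
  ((forall t1 t2, 0 <= t1 -> t1 <= t2 -> Sf sigma t1 <= Sf sigma t2) /\
   (forall t, 0 <= t -> Sf sigma t <= Ef d xi t)) /\
  (exists L : R, is_lim (Sf sigma) p_infty L /\ is_lim (Ef d xi) p_infty L).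
Proof.
  set (dEf := fun t => RInt (fun v => sumd d (fun i => 2 * Dts 1 0 (xi i) t v * xi i t v)) 0 1).
  set (dQf := fun t => RInt (fun v => sumd d (fun i => 2 * (Dts 2 0 (xi i) t v - Dts 1 0 (xi i) t v) * (Dts 1 0 (xi i) t v - xi i t v))) 0 1).
  assert (DE : forall t, is_derive (Ef d xi) t (dEf t)) by (intros; apply (dE d xi sigma H)).
  assert (DQ : forall t, is_derive (Qf d xi) t (dQf t)) by (intros; apply (dQ d xi sigma H)).
  assert (dEv : forall t, 0 <= t -> dEf t = 2 * (Ef d xi t - Sf sigma t)) by (intros; apply (dE_val d xi sigma H); auto).
  assert (Emono : forall t1 t2, 0 <= t1 -> t1 <= t2 -> Ef d xi t1 <= Ef d xi t2).
  { intros t1 t2 H1 H2. apply (mvt_nonneg (Ef d xi) dEf); auto.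
    intros x Hx. rewrite dEv by lra. pose proof (S_le_E d xi sigma H x ltac:(lra)). lra. }
  assert (Smono : forall t1 t2, 0 <= t1 -> t1 <= t2 -> Sf sigma t1 <= Sf sigma t2).
  { intros t1 t2 H1 H2. rewrite <- (QS d xi sigma H t1), <- (QS d xi sigma H t2) by lra.
    apply (mvt_nonneg (Qf d xi) dQf); auto. intros x Hx. unfold dQf. exact (dQ_nonneg d xi sigma H x Hx). }
  assert (Eb : forall t, 0 <= t -> Ef d xi t <= 1 / (4 * PI ^ 2)) by (intros; apply (E_bound d xi sigma H); auto).
  assert (SE : forall t, 0 <= t -> Sf sigma t <= Ef d xi t) by (intros; apply (S_le_E d xi sigma H); auto).
  split; [split; auto | split; [split; auto |]].
  destruct (mono_lim (Ef d xi) (1 / (4 * PI ^ 2)) Emono Eb) as [LE [limE [EleLE [appE _]]]].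
  destruct (mono_lim (Sf sigma) (1 / (4 * PI ^ 2)) Smono) as [LS [limS [SleLS [_ leastS]]]].
  { intros t Ht. apply Rle_trans with (Ef d xi t); auto. }
  assert (LSE : LS <= LE). { apply leastS. intros t Ht. apply Rle_trans with (Ef d xi t); auto. }
  assert (Heq : @eq R LS LE).
  { destruct (Rle_lt_or_eq_dec LS LE LSE) as [lt|e]; [exfalso | exact e].
    set (dl := (LE - LS) / 2).
    destruct (appE dl ltac:(unfold dl; lra)) as [T [HT HET]].
    assert (2 * dl * ((T + 1) - T) <= Ef d xi (T + 1) - Ef d xi T).
    { apply (mvt_lower (Ef d xi) dEf); auto. lra. intros x Hx. rewrite dEv by lra.
      assert (Ef d xi T <= Ef d xi x) by (apply Emono; lra).
      assert (Sf sigma x <= LS) by (apply SleLS; lra). unfold dl in *. lra. }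
    assert (Ef d xi (T + 1) <= LE) by (apply EleLE; lra). unfold dl in *. lra. }
  exists LS. split. exact limS. rewrite Heq. exact limE.
Qed.

Theorem proposition3p1 (d : nat) (xi : nat -> R -> R -> R) (sigma : R -> R -> R) :
  (2 <= d)%nat ->
  normalized_flow d xi sigma ->
  let E := fun t => RInt (fun s => sqnorm d xi t s) 0 1 in
  let S := fun t => RInt (fun s => sigma t s) 0 1 in
  (* (i) *)
  ((forall t1 t2, 0 <= t1 -> t1 <= t2 -> E t1 <= E t2) /\
   (forall t, 0 <= t -> E t <= 1 / (4 * PI ^ 2))) /\
  (* (ii) *)
  ((forall t1 t2, 0 <= t1 -> t1 <= t2 -> S t1 <= S t2) /\
   (forall t, 0 <= t -> S t <= E t)) /\
  (* (iii) *)
  (exists L : R, is_lim S p_infty L /\ is_lim E p_infty L).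
Proof.
  intros Hd Hnf. exact (main_thm d xi sigma Hnf).
Qed.
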